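(* Let $r = 2^4 + 2^3 + 2 + 1 = 27$ and $p = 2^{64} \oplus r$. As $x$ ranges over all nonnegative integers of degree less than $128$ (i.e. $x < 2^{128}$), the quantity $\big((z \div 2^{64}) \star 2^{64}\big) \bmod p$, where $z = (x \div 2^{64}) \star r$, takes only $16$ possible values.
   Context: All operations are carry-less. For nonnegative integers $a,b$, with $a_i$ the $i$-th least significant bit of $a$, the carry-less product $a \star b$ is the integer whose $i$-th bit is $\bigoplus_{k=0}^{i} a_{i-k} b_k$; $\oplus$ is bitwise XOR. For a positive integer $x$, $\mathrm{degree}(x)$ is the index (starting at $0$) of its most significant nonzero bit. For integers $a$ and $b \neq 0$ there are unique integers $\alpha,\beta$ with $a = \alpha \star b \oplus \beta$ and $\beta = 0$ or $\mathrm{degree}(\beta) < \mathrm{degree}(b)$; one writes $a \div b = \alpha$ and $a \bmod b = \beta$. Precedence: $\star$, $\bmod$, $\div$ first, then $\oplus$. *)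

(* Defs.v *)
From mathcomp Require Import all_boot.
From Stdlib Require Import PeanoNat.

Set Implicit Arguments.
Unset Strict Implicit.
Unset Printing Implicit Defensive.

Definition bit (a i : nat) : bool := Nat.testbit a i.

Definition xorn (a b : nat) : nat := Nat.lxor a b.

Definition degree (x : nat) : nat := Nat.log2 x.

(* Carry-less product, literally: bit i of (a * b) is
   XOR_{k=0..i} a_{i-k} b_k.  All bits of index >= a + b + 1 vanish,
   since degree a + degree b < a + b + 1, so the finite sum is exact. *)
Definition clmul (a b : nat) : nat :=
  \sum_(0 <= i < a + b + 1)
     (\big[xorb/false]_(0 <= k < i.+1) (bit a (i - k) && bit b k)) * 2 ^ i.

(* Carry-less Euclidean division by schoolbook long division:
   scanning positions d+m (d = degree b) from high to low, whenever the
   current remainder has bit d+m set, xor in b * 2^m (= b shifted by m)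
   and set bit m of the quotient. *)
Fixpoint cldm_aux (n b d : nat) (qr : nat * nat) : nat * nat :=
  match n with
  | 0 => qr
  | m.+1 =>
      let q := qr.1 in let r := qr.2 in
      let qr' := if bit r (d + m)
                 then (Nat.lor q (2 ^ m), xorn r (b * 2 ^ m))
                 else (q, r) in
      cldm_aux m b d qr'
  end.

(* (a div b, a mod b); for b = 0 the value is irrelevant (set to (0, a)). *)
Definition cldivmod (a b : nat) : nat * nat :=
  if b == 0 then (0, a) else cldm_aux a.+1 b (degree b) (0, a).

Definition cldiv (a b : nat) : nat := (cldivmod a b).1.
Definition clmod (a b : nat) : nat := (cldivmod a b).2.

Definition r_const : nat := 2 ^ 4 + 2 ^ 3 + 2 + 1.
Definition p_const : nat := xorn (2 ^ 64) r_const.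

Definition fold_val (x : nat) : nat :=
  let z := clmul (cldiv x (2 ^ 64)) r_const in
  clmod (clmul (cldiv z (2 ^ 64)) (2 ^ 64)) p_const.

(* Main.v *)
Require Import Defs.
From Stdlib Require Import PeanoNat FunctionalExtensionality.
From mathcomp Require Import all_boot zify.

Local Notation P2 n := (Nat.pow 2 n).

Fixpoint xs (n : nat) (f : nat -> bool) : bool :=
  if n is n'.+1 then xs n' f (+) f n' else false.

Lemma xs_eq n f g : (forall m, m < n -> f m = g m) -> xs n f = xs n g.
Proof.
elim: n => [//|n IH] H /=; rewrite IH ?H // => m Hm; apply: H; lia.
Qed.

Lemma xs_false n f : (forall m, m < n -> f m = false) -> xs n f = false.
Proof.
elim: n => [//|n IH] H /=; rewrite IH ?H // => m Hm; apply: H; lia.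
Qed.

Lemma xs_ext_false n N f : n <= N -> (forall m, n <= m -> m < N -> f m = false) ->
  xs N f = xs n f.
Proof.
move=> le; rewrite -(subnKC le); elim: (N - n) => [|k IH] H; first by rewrite addn0.
rewrite addnS /= IH ?H ?addbF //; try lia.
move=> m H1 H2; apply: H; lia.
Qed.

Lemma xs_single n d f : (forall k, k < n -> k != d -> f k = false) ->
  xs n f = (d < n) && f d.
Proof.
elim: n => [//|n IH] H /=.
have H' : forall k, k < n -> k != d -> f k = false by move=> k Hk; apply: H; lia.
rewrite (IH H'); case: (eqVneq n d) => [<-|ne].
- have -> : (n < n) = false by lia. by rewrite ltnSn.
- rewrite (H n) ?addbF //; have -> : (d < n.+1) = (d < n) by lia. by [].
Qed.

Lemma bigxor_xs n F : \big[xorb/false]_(0 <= k < n) F k = xs n F.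
Proof.
have E : xorb = addb.
  by apply: functional_extensionality => a; apply: functional_extensionality => b; case: a; case: b.
rewrite E; elim: n => [|n IH]; first by rewrite big_geq.
by rewrite big_nat_recr //= IH.
Qed.

Lemma bitX a b i : bit (xorn a b) i = bit a i (+) bit b i.
Proof. by rewrite /bit /xorn Nat.lxor_spec; case: (Nat.testbit a i); case: (Nat.testbit b i). Qed.

Lemma bitP2 n i : bit (P2 n) i = (i == n).
Proof.
rewrite /bit Nat.pow2_bits_eqb; case: (Nat.eqb_spec n i) => [->|H]; first by rewrite eqxx.
by apply/esym/eqP => E; apply: H.
Qed.

Lemma bit_lt a i : a < P2 i -> bit a i = false.
Proof.
move=> H; rewrite /bit; case: a H => [|a] H; first exact: Nat.bits_0.
apply: Nat.bits_above_log2; apply/Nat.log2_lt_pow2; lia.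
Qed.

Lemma P2_le i j : i <= j -> P2 i <= P2 j.
Proof. move=> H; apply/leP; apply: Nat.pow_le_mono_r; lia. Qed.

Lemma bit_ge a i : a <= i -> bit a i = false.
Proof.
move=> H; apply: bit_lt; have := Nat.pow_gt_lin_r 2 i; lia.
Qed.

Lemma bit_mulP2 a n i : bit (a * P2 n) i = (n <= i) && bit a (i - n).
Proof.
rewrite /bit; case: (leqP n i) => H.
- by rewrite Nat.mul_pow2_bits_high //; lia.
- by rewrite Nat.mul_pow2_bits_low //; lia.
Qed.

Lemma bit_divP2 a n i : bit (Nat.div a (P2 n)) i = bit a (i + n).
Proof. by rewrite /bit Nat.div_pow2_bits. Qed.

Lemma sumP (f : nat -> bool) N :
  \sum_(0 <= i < N) f i * P2 i < P2 N /\
  forall j, bit (\sum_(0 <= i < N) f i * P2 i) j = (j < N) && f j.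
Proof.
elim: N => [|N [IHb IHs]].
  by rewrite big_geq //; split => // j; rewrite /bit Nat.bits_0.
rewrite big_nat_recr //=.
set S := \sum_(0 <= i < N) f i * P2 i in IHb IHs *.
have P2S : P2 N.+1 = P2 N + P2 N by rewrite Nat.pow_succ_r'; lia.
case E: (f N).
- have Hl : Nat.land S (P2 N) = 0.
    apply: Nat.bits_inj_0 => k; rewrite Nat.land_spec.
    have := bitP2 N k; rewrite /bit => ->.
    case: (eqVneq k N) => [->|]; last by rewrite andbF.
    by rewrite andbT; apply: bit_lt.
  rewrite mul1n; split; first by lia.
  have -> : S + P2 N = xorn S (P2 N) by apply: Nat.add_nocarry_lxor.
  move=> j; rewrite bitX IHs bitP2.
  case: (eqVneq j N) => [->|ne]; first by rewrite ltnn E ltnSn.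
  rewrite addbF; have -> : (j < N.+1) = (j < N) by lia. by [].
- rewrite mul0n addn0; split; first by lia.
  move=> j; rewrite IHs; case: (eqVneq j N) => [->|ne]; first by rewrite E !andbF.
  have -> : (j < N.+1) = (j < N) by lia. by [].
Qed.

Lemma clmul_bit a b i : bit (clmul a b) i = xs i.+1 (fun k => bit a (i - k) && bit b k).
Proof.
rewrite /clmul (proj2 (sumP (fun i => \big[xorb/false]_(0 <= k < i.+1) (bit a (i - k) && bit b k)) _)) bigxor_xs.
case: ltnP => // H; apply/esym/xs_false => k Hk.
case: (leqP k b) => Hkb; last by rewrite (bit_ge b k) ?andbF //; lia.
by rewrite bit_ge //; lia.
Qed.

Lemma bitP2P2 d n i : bit (P2 d * P2 n) i = (i == d + n).
Proof.
rewrite bit_mulP2 bitP2; case: (leqP n i) => H /=.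
- apply/eqP/eqP; lia.
- apply/esym/eqP; lia.
Qed.

Lemma bitOr a b i : bit (Nat.lor a b) i = bit a i || bit b i.
Proof. by rewrite /bit Nat.lor_spec. Qed.

Lemma cldm_pow2 d : forall n q r, (forall m, m < n -> bit q m = false) ->
  forall m, bit (cldm_aux n (P2 d) d (q, r)).1 m = if m < n then bit r (d + m) else bit q m.
Proof.
elim=> [|n IH] q r Hq m /=; first by [].
case E: (bit r (d + n)).
- rewrite IH.
  + rewrite bitX bitP2P2 bitOr bitP2.
    case: (ltngtP m n) => H.
    * have -> : (d + m == d + n) = false by apply/eqP; lia.
      rewrite addbF; have -> : m < n.+1 by lia. by [].
    * have -> : (m < n.+1) = false by lia. by rewrite orbF.
    * by subst; rewrite ltnSn /= ?E ?eqxx ?orbT.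
  + move=> k Hk; rewrite bitOr bitP2 Hq; last by lia.
    apply/eqP; lia.
- rewrite IH.
  + case: (ltngtP m n) => H.
    * have -> : m < n.+1 by lia. by [].
    * have -> : (m < n.+1) = false by lia. by [].
    * by subst; rewrite ltnSn /= ?E ?Hq.
  + move=> k Hk; apply: Hq; lia.
Qed.

Lemma cldiv_pow2 d a m : bit (cldiv a (P2 d)) m = bit a (d + m).
Proof.
rewrite /cldiv /cldivmod.
have -> : (P2 d == 0) = false by apply/eqP; apply: Nat.pow_nonzero.
have -> : degree (P2 d) = d by rewrite /degree Nat.log2_pow2 //; lia.
rewrite cldm_pow2; last by move=> k _; rewrite /bit Nat.bits_0.
case: ltnP => // H; rewrite /bit Nat.bits_0; apply/esym/bit_ge; lia.
Qed.

Lemma cldmC b d e (Hb : forall j, bit b j = (j == d) || bit e j) :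
  forall n q r, (forall m, m < n -> bit r (d + m) -> forall k, d <= k + m -> bit e k = false) ->
  forall j, j < d -> bit (cldm_aux n b d (q, r)).2 j =
    bit r j (+) xs n (fun m => bit r (d + m) && (m <= j) && bit e (j - m)).
Proof.
elim=> [|n IH] q r H j Hj /=; first by rewrite addbF.
case E: (bit r (d + n)).
- have He := H n (ltnSn n) E.
  have Hr1 : forall i, i < d + n -> bit (xorn r (b * P2 n)) i = bit r i (+) ((n <= i) && bit e (i - n)).
    move=> i Hi; rewrite bitX bit_mulP2 Hb.
    have -> : (i - n == d) = false by apply/eqP; lia. by [].
  rewrite IH //.
  + rewrite Hr1; last by lia.
    rewrite (@xs_eq _ _ (fun m => bit r (d + m) && (m <= j) && bit e (j - m))).
    * by set X := xs _ _; rewrite /= -addbA (addbC _ X).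
    * move=> m Hm; rewrite Hr1; last by lia.
      have -> : bit e (d + m - n) = false by apply: He; lia.
      by rewrite andbF addbF.
  + move=> m Hm; rewrite Hr1; last by lia.
    have -> : bit e (d + m - n) = false by apply: He; lia.
    rewrite andbF addbF; apply: H; lia.
- rewrite IH //.
  + by rewrite ?E /= addbF.
  + move=> m Hm; apply: H; lia.
Qed.

Lemma r27 : r_const = 27. Proof. by []. Qed.

Lemma bit27 k : 5 <= k -> bit 27 k = false.
Proof. move=> H; apply: bit_lt; apply: (@leq_trans (P2 5)) => //; exact: P2_le. Qed.

Definition tz x := cldiv (clmul (cldiv x (P2 64)) r_const) (P2 64).

Lemma fold_valE x : fold_val x = clmod (clmul (tz x) (P2 64)) p_const.
Proof. by []. Qed.

#[local] Opaque clmul cldiv fold_val.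

Lemma bit_tz x m : bit (tz x) m = xs 5 (fun k => bit x (64 + (64 + m - k)) && bit 27 k).
Proof.
rewrite /tz cldiv_pow2 clmul_bit r27 (@xs_ext_false 5); [|lia|].
- apply: xs_eq => k Hk; by rewrite cldiv_pow2.
- move=> k H1 _; by rewrite bit27 ?andbF.
Qed.

#[local] Opaque tz.

Lemma tz_dep x y : (forall i, 124 <= i -> bit x i = bit y i) -> tz x = tz y.
Proof.
move=> H; apply: (Nat.bits_inj (tz x) (tz y)) => m.
change (bit (tz x) m = bit (tz y) m); erewrite (bit_tz x m); erewrite (bit_tz y m).
apply: xs_eq => k Hk; rewrite H //; lia.
Qed.

Lemma bitp j : bit p_const j = (j == 64) || bit 27 j.
Proof.
rewrite /p_const r27; erewrite bitX; rewrite bitP2; case: (eqVneq j 64) => [->|] //=.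
Qed.

Lemma degp : degree p_const = 64.
Proof.
apply: Nat.log2_bits_unique; first by have := bitp 64; rewrite /bit => ->.
move=> m Hm; have := bitp m; rewrite /bit => ->.
have -> : (m == 64) = false by apply/eqP; lia.
rewrite -/(bit 27 m) bit27 //; lia.
Qed.

Lemma p_neq0 : (p_const == 0) = false.
Proof.
apply/eqP => E; have := bitp 64; rewrite E /bit Nat.bits_0 //.
Qed.

Lemma fold_low x : (forall i, 128 <= i -> bit x i = false) -> forall j, j < 64 ->
  bit (fold_val x) j = xs 4 (fun m => bit (tz x) m && (m <= j) && bit 27 (j - m)).
Proof.
move=> Hx j Hj.
have Ht : forall m, 4 <= m -> bit (tz x) m = false.
  move=> m Hm. erewrite (bit_tz x m). apply: xs_false => k Hk. rewrite Hx //. lia.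
erewrite fold_valE. move: (tz x) Ht => t Ht.
have Hw : forall i, bit (clmul t (P2 64)) i = (64 <= i) && bit t (i - 64).
  move=> i. rewrite clmul_bit (@xs_single _ 64).
  - rewrite bitP2 eqxx andbT; by [].
  - move=> k _ ne; by rewrite bitP2 (negbTE ne) andbF.

rewrite /clmod /cldivmod. rewrite p_neq0. rewrite degp.
have Hp := bitp. move: p_const Hp => p Hp.
move: (clmul t (P2 64)) Hw => w Hw.
rewrite (@cldmC _ _ 27) //.
- rewrite Hw. have -> : (64 <= j) = false by lia.
  rewrite andFb. rewrite addFb. rewrite (@xs_eq _ _ (fun m => bit t m && (m <= j) && bit 27 (j - m))).
  + have Hf : forall m, w < m -> bit t m && (m <= j) && bit 27 (j - m) = false.
      move=> m Hm; have := Hw (64 + m). rewrite bit_ge; last by lia.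
      have -> : 64 + m - 64 = m by lia. have -> : (64 <= 64 + m) = true by lia. by move=> /esym /= ->.
    case: (leqP w.+1 4) => H.
    * rewrite (@xs_ext_false w.+1 4) // => m H1 H2; apply: Hf; lia.
    * rewrite -(@xs_ext_false 4 w.+1) //; try lia.
      move=> m H1 H2; by rewrite Ht.
  + move=> m _; rewrite Hw; have -> : 64 + m - 64 = m by lia. by [].
- move=> m _; rewrite Hw; have -> : 64 + m - 64 = m by lia.
  case: (leqP 4 m) => H; first by rewrite Ht.
  move=> _ k Hk; apply: bit27; lia.
Qed.

Lemma expnP n : 2 ^ n = P2 n.
Proof. elim: n => [|n IH]; first by rewrite expn0. rewrite expnS IH Nat.pow_succ_r'; reflexivity. Qed.

Definition Tb c m := xs 5 (fun k => bit c (4 + m - k) && bit 27 k).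
Definition Lb c j := xs 4 (fun m => Tb c m && (m <= j) && bit 27 (j - m)).

Lemma rep_bit c i : c < 16 -> 128 <= i -> bit (c * P2 124) i = false.
Proof.
move=> Hc Hi; rewrite bit_mulP2 bit_lt ?andbF //.
apply: (@leq_trans (P2 4)); first exact: Hc. apply: P2_le; lia.
Qed.

Lemma rep_low c j : c < 16 -> j < 4 -> bit (fold_val (c * P2 124)) j = Lb c j.
Proof.
move=> Hc Hj; rewrite fold_low; [|by move=> i; apply: rep_bit|lia].
apply: xs_eq => m _; congr (_ && _ && _).
erewrite bit_tz; rewrite /Tb; apply: xs_eq => k Hk; erewrite bit_mulP2.
have -> : 124 <= 64 + (64 + m - k) by lia.
have -> : 64 + (64 + m - k) - 124 = 4 + m - k by lia. by [].
Qed.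

Lemma rows_inj c1 c2 : c1 < 16 -> c2 < 16 ->
  [seq Lb c1 j | j <- iota 0 4] = [seq Lb c2 j | j <- iota 0 4] -> c1 = c2.
Proof.
have A : all (fun c1 => all (fun c2 => ([seq Lb c1 j | j <- iota 0 4] == [seq Lb c2 j | j <- iota 0 4]) ==> (c1 == c2)) (iota 0 16)) (iota 0 16) by vm_compute.
move=> H1 H2 E.
have M1 : c1 \in iota 0 16 by rewrite mem_iota; lia.
have M2 : c2 \in iota 0 16 by rewrite mem_iota; lia.
move/allP/(_ c1 M1)/allP/(_ c2 M2): A.
by rewrite E eqxx => /eqP.
Qed.

Lemma fold_dep x y : (forall i, 124 <= i -> bit x i = bit y i) -> fold_val x = fold_val y.
Proof. move=> H; erewrite (fold_valE x); erewrite (fold_valE y); erewrite (tz_dep x y H); reflexivity. Qed.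

Lemma rep_lt c : c < 16 -> c * P2 124 < 2 ^ 128.
Proof.
move=> Hc; rewrite expnP; apply/ltP.
have -> : P2 128 = Nat.mul (P2 4) (P2 124) by rewrite -Nat.pow_add_r.
have P0 : (0 < P2 124)%coq_nat by apply/Nat.neq_0_lt_0; apply: Nat.pow_nonzero; lia.
apply: (proj1 (Nat.mul_lt_mono_pos_r (P2 124) c (P2 4) P0)).
apply/ltP; exact: Hc.
Qed.

Lemma top_lt x : x < 2 ^ 128 -> Nat.div x (P2 124) < 16.
Proof.
rewrite expnP => Hx; apply/ltP; apply: Nat.div_lt_upper_bound; first by apply: Nat.pow_nonzero; lia.
change (x < Nat.mul (P2 124) (P2 4))%coq_nat; rewrite -Nat.pow_add_r; apply/ltP; exact: Hx.
Qed.

Theorem lemma7 :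
  exists s : seq nat,
    uniq s /\ size s = 16 /\
    (forall v : nat, v \in s <-> exists x : nat, x < 2 ^ 128 /\ fold_val x = v).
Proof.
exists [seq fold_val (c * P2 124) | c <- iota 0 16]. split; [|split].
- rewrite map_inj_in_uniq; [exact: iota_uniq|]. move=> c1 c2.
  move=> H1 H2 E; move: H1 H2. rewrite !mem_iota. move=> H1 H2.
  have R : [seq Lb c1 j | j <- iota 0 4] = [seq Lb c2 j | j <- iota 0 4].
    apply/eq_in_map => j; rewrite mem_iota => /andP [_ Hj].
    rewrite -(@rep_low c1 j); try lia.
    rewrite -(@rep_low c2 j); try lia.
    erewrite E. reflexivity.
  apply: rows_inj R; lia.
- by rewrite size_map size_iota.
- move=> v; split.
  + move=> /mapP [c]. rewrite mem_iota. move=> /andP [_ Hc] ->.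
    exists (c * P2 124). split; [apply: rep_lt; lia | reflexivity].
  + move=> [x [Hx <-]]; apply/mapP.
    exists (Nat.div x (P2 124)).
    * rewrite mem_iota. apply/andP; split; [exact: leq0n | exact: top_lt].
    * apply: fold_dep => i Hi.
      erewrite bit_mulP2; rewrite Hi; erewrite bit_divP2; congr bit; lia.
Qed.
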